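(* Let $\mathbb{F},\widetilde{\mathbb{F}}$ be fields with $\operatorname{char}(\mathbb{F})\notin\{2,3,5\}$ and $\operatorname{char}(\widetilde{\mathbb{F}})\neq 2$, and let $f:\mathbb{F}\to\widetilde{\mathbb{F}}$ be an SD-map. Then $\operatorname{char}(\mathbb{F})=\operatorname{char}(\widetilde{\mathbb{F}})$, and moreover $f$ fixes the common prime subfield (i.e.\ $f$ restricted to the prime subfield of $\mathbb{F}$ is the canonical identification with the prime subfield of $\widetilde{\mathbb{F}}$).
   Context: A map $f:\mathbb{F}\to\widetilde{\mathbb{F}}$ between fields is called an SD-map if for all $x\neq y$ in $\mathbb{F}$ one has $f(x)\neq f(y)$ and \[ f\left(\frac{x+y}{x-y}\right)=\frac{f(x)+f(y)}{f(x)-f(y)}. \] *)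

(* Defs.v *)
From HB Require Import structures.
From mathcomp Require Import all_boot all_order all_algebra.
Set Implicit Arguments. Unset Strict Implicit. Unset Printing Implicit Defensive.
Import Order.TTheory GRing.Theory Num.Theory.
Local Open Scope ring_scope.

Definition SD_map (F G : fieldType) (f : F -> G) : Prop :=
  forall x y : F, x != y ->
    f x != f y /\ f ((x + y) / (x - y)) = (f x + f y) / (f x - f y).

(* Main.v *)
Require Import Defs.
From mathcomp Require Import all_boot all_order all_algebra.
From mathcomp Require Import ring zify.
Import GRing.Theory.
Local Open Scope ring_scope.

Lemma char_ne0 (R : fieldType) (p : nat) : prime p -> p \notin [pchar R] ->
  (p%:R : R) != 0.
Proof. by move=> pp; rewrite inE /= pp. Qed.

Lemma sd_inj {F G : fieldType} {f : F -> G} (hf : SD_map f) {x y} :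
  x != y -> f x != f y.
Proof. by move=> /hf []. Qed.

Lemma sd01 {F G : fieldType} {f : F -> G} (hf : SD_map f)
  (h2F : (2%:R : F) != 0) (h2G : (2%:R : G) != 0) : f 0 = 0 /\ f 1 = 1.
Proof.
have E x : x != 0 -> f 1 * (f x - f 0) = f x + f 0.
  move=> x0; have [ne e] := hf x 0 x0; move: e.
  have -> : (x + 0) / (x - 0) = 1 by rewrite subr0 addr0 divff.
  move=> e.
  by rewrite e mulfVK // subr_eq0.
have n1 : (1 : F) != 0 by exact: oner_neq0.
have nm1 : (-1 : F) != 0 by rewrite oppr_eq0.
have d : (1 : F) != -1.
  apply: contra h2F => /eqP h; apply/eqP.
  by rewrite -[2%:R]/(1 + 1 : F) {1}h addNr.
have e1 := E 1 n1; have e2 := E (-1) nm1.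
have hb : f 1 = 1.
  have : (f 1 - 1) * (f 1 - f (-1)) = 0.
    have -> : (f 1 - 1) * (f 1 - f (-1)) =
      (f 1 * (f 1 - f 0) - (f 1 + f 0)) - (f 1 * (f (-1) - f 0) - (f (-1) + f 0)) by ring.
    by rewrite e1 e2 !subrr ?subr0.
  move/eqP; rewrite mulf_eq0 => /orP [/eqP/subr0_eq //|].
  by rewrite subr_eq0 (negbTE (sd_inj hf d)).
split=> //.
move: e1; rewrite hb mul1r => /eqP; rewrite -subr_eq0.
have -> : 1 - f 0 - (1 + f 0) = - (2%:R * f 0) by rewrite -[2%:R]/(1 + 1 : G); ring.
by rewrite oppr_eq0 mulf_eq0 (negbTE h2G) /= => /eqP.
Qed.

Lemma sd_odd {F G : fieldType} {f : F -> G} (hf : SD_map f)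
  (h2F : (2%:R : F) != 0) (h2G : (2%:R : G) != 0) x : f (- x) = - f x.
Proof.
have [f0 f1] := sd01 hf h2F h2G.
have [->|x0] := eqVneq x 0; first by rewrite oppr0 f0 oppr0.
have d : x != - x.
  apply: contra x0 => /eqP h; apply/eqP.
  have : 2%:R * x = 0 by rewrite -[2%:R]/(1 + 1 : F) mulrDl mul1r {1}h addNr.
  by move/eqP; rewrite mulf_eq0 (negbTE h2F) => /eqP.
have [ne e] := hf x (- x) d; move: e.
rewrite subrr opprK mul0r f0 => /esym/eqP; rewrite mulf_eq0 invr_eq0 subr_eq0.
rewrite (negbTE ne) orbF addr_eq0 => /eqP ->; by rewrite opprK.
Qed.

Lemma sd_mul {F G : fieldType} {f : F -> G} (hf : SD_map f)
  (h2F : (2%:R : F) != 0) (h2G : (2%:R : G) != 0) x y : f (x * y) = f x * f y.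
Proof.
have [f0 f1] := sd01 hf h2F h2G.
have [->|y0] := eqVneq y 0; first by rewrite mulr0 f0 mulr0.
have [->|x1] := eqVneq x 1; first by rewrite mul1r f1 mul1r.
have d : x * y != y.
  apply: contra x1 => /eqP h; apply/eqP.
  by apply: (mulIf y0); rewrite h mul1r.
have [ne e] := hf _ _ d; have [ne' e'] := hf x 1 x1.
have E2 : (x * y + y) / (x * y - y) = (x + 1) / (x - 1).
  have x10 : x - 1 != 0 by rewrite subr_eq0.
  by field; rewrite x10 subr_eq0 d.
rewrite E2 in e.
rewrite e' f1 in e ne'.
move/eqP: e; rewrite eq_sym eqr_div ?subr_eq0 // => /eqP e.
set a := f (x * y) in e *; set b := f y in e *; set c := f x in e *.
apply/eqP; rewrite -subr_eq0; apply/eqP.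
have : 2%:R * (a - c * b) = 0.
  have -> : 2%:R * (a - c * b) = (c + 1) * (a - b) - (a + b) * (c - 1)
    by rewrite -[2%:R]/(1 + 1 : G); ring.
  by rewrite e subrr.
by move/eqP; rewrite mulf_eq0 (negbTE h2G) => /eqP.
Qed.

Lemma sd_rec {F G : fieldType} {f : F -> G} (hf : SD_map f)
  (h2F : (2%:R : F) != 0) (h2G : (2%:R : G) != 0) x y z :
  y = x + 1 -> z = x - 1 -> f y * (f x - 1) = (f x + 1) * f z.
Proof.
have [f0 f1] := sd01 hf h2F h2G.
move=> -> ->.
have [->|x1] := eqVneq x 1; first by rewrite subrr f1 subrr f0 !mulr0.
have [ne e] := hf x 1 x1; rewrite f1 in ne e.
have x10 : x - 1 != 0 by rewrite subr_eq0.
rewrite -{1}[x + 1](divfK x10) sd_mul // e.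
rewrite mulrAC divfK ?subr_eq0 //.
Qed.

Lemma sd_two {F G : fieldType} {f : F -> G} (hf : SD_map f)
  (h2F : (2%:R : F) != 0) (h3F : (3%:R : F) != 0) (h5F : (5%:R : F) != 0)
  (h2G : (2%:R : G) != 0) : f 2%:R = 2%:R.
Proof.
have [f0 f1] := sd01 hf h2F h2G.
have R := sd_rec hf h2F h2G.
have E1 := R 2%:R 3%:R 1 ltac:(ring) ltac:(ring).
have E2 := R 4%:R 5%:R 3%:R ltac:(ring) ltac:(ring).
have E3 := R 5%:R 6%:R 4%:R ltac:(ring) ltac:(ring).
have f4 : f 4%:R = f 2%:R * f 2%:R.
  by rewrite -sd_mul //; congr f; ring.
have f6 : f 6%:R = f 2%:R * f 3%:R.
  by rewrite -sd_mul //; congr f; ring.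
rewrite f1 mulr1 in E1; rewrite f4 in E2; rewrite f6 f4 in E3.
set u := f 2%:R in E1 E2 E3 *; set c := f 3%:R in E1 E2 E3 *;
  set P := f 5%:R in E1 E2 E3 *.
have u0 : u != 0 by rewrite -f0 /u; exact: (sd_inj hf h2F).
have P0 : P != 0 by rewrite -f0 /P; exact: (sd_inj hf h5F).
have u1 : u + 1 != 0.
  rewrite addr_eq0 -f1 -(sd_odd hf h2F h2G) /u; apply: (sd_inj hf).
  by rewrite -subr_eq0 opprK (_ : 2%:R + 1 = 3%:R :> F) //; ring.
have E3' : c * (P - 1) = (P + 1) * u.
  by apply: (mulfI u0); rewrite mulrA E3 mulrCA.
have d1 : c * (u - 1) - (u + 1) = 0 by rewrite E1 subrr.
have d2 : P * (u * u - 1) - (u * u + 1) * c = 0 by rewrite E2 subrr.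
have d3 : c * (P - 1) - (P + 1) * u = 0 by rewrite E3' subrr.
have key : (u + 1) * (2%:R * P * u * (u - 2%:R)) = 0.
  have -> : (u + 1) * (2%:R * P * u * (u - 2%:R)) =
    (u - 1) * (P * (u * u - 1) - (u * u + 1) * c)
    + (u * u + 1) * (c * (u - 1) - (u + 1))
    - (u + 1) * ((u - 1) * (c * (P - 1) - (P + 1) * u)
                 - (P - 1) * (c * (u - 1) - (u + 1))) by ring.
  by rewrite d1 d2 d3 !mulr0 subrr mulr0 !addr0 subr0.
move/eqP: key; rewrite !mulf_eq0 (negbTE u1) (negbTE h2G) (negbTE P0) (negbTE u0) /=.
by rewrite subr_eq0 => /eqP.
Qed.

Lemma sd_nat_aux {F G : fieldType} {f : F -> G} (hf : SD_map f)
  (h2F : (2%:R : F) != 0) (h3F : (3%:R : F) != 0) (h5F : (5%:R : F) != 0)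
  (h2G : (2%:R : G) != 0) k :
  (forall j, (0 < j < k)%N -> (j%:R : F) != 0) -> f k%:R = k%:R.
Proof.
have [f0 f1] := sd01 hf h2F h2G.
elim/ltn_ind: k => k IH hk.
case: k IH hk => [|[|[|m]]] IH hk; first by rewrite f0.
- by rewrite f1.
- exact: sd_two.
have hk' j : (0 < j < m.+2)%N -> (j%:R : F) != 0.
  by move=> /andP [j0 jm]; apply: hk; rewrite j0 /= ltnS ltnW.
have hk'' j : (0 < j < m.+1)%N -> (j%:R : F) != 0.
  by move=> /andP [j0 jm]; apply: hk; rewrite j0 /= (ltn_trans jm).
have IH2 := IH m.+2 (ltnSn _) hk'.
have IH1 := IH m.+1 (ltnW (ltnSn _)) hk''.
have ez : (m.+1%:R : F) = m.+2%:R - 1 by rewrite [m.+2%:R]mulrSr addrK.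
have E := sd_rec hf h2F h2G m.+2%:R m.+3%:R m.+1%:R
  (mulrSr _ _) ez.
rewrite IH2 IH1 in E.
have ne : (m.+2%:R : G) - 1 != 0.
  rewrite -IH2 -f1 subr_eq0; apply: (sd_inj hf).
  have hj : (0 < m.+1 < m.+3)%N by rewrite /= ltnS ltnW.
  by rewrite -subr_eq0 [m.+2%:R]mulrSr addrK; exact: (hk m.+1 hj).
apply: (mulIf ne); rewrite E.
by rewrite [m.+2%:R in RHS]mulrSr addrK -mulrSr mulrC.
Qed.

Lemma sd_nat {F G : fieldType} {f : F -> G} (hf : SD_map f)
  (h2F : (2%:R : F) != 0) (h3F : (3%:R : F) != 0) (h5F : (5%:R : F) != 0)
  (h2G : (2%:R : G) != 0) k : f k%:R = k%:R.
Proof.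
have [f0 f1] := sd01 hf h2F h2G.
elim/ltn_ind: k => k IH.
case: (boolP [exists j : 'I_k, (0 < j)%N && ((j : nat)%:R == 0 :> F)]).
- move/existsP => [[j jk] /andP [j0 /eqP jF]] /=.
  have jG : (j%:R : G) = 0 by rewrite -(IH j jk) jF f0.
  have kk : k = ((k - j) + j)%N by rewrite subnK // ltnW.
  rewrite kk !natrD jF jG !addr0; apply: IH.
  move: j0 => /= j0; lia.
- move/existsPn => H; apply: sd_nat_aux => // j /andP [j0 jk].
  by move: (H (Ordinal jk)); rewrite /= j0.
Qed.

Theorem theorem2p4 (F G : fieldType) (f : F -> G)
  (hF2 : 2%N \notin [pchar F]) (hF3 : 3%N \notin [pchar F])
  (hF5 : 5%N \notin [pchar F]) (hG2 : 2%N \notin [pchar G])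
  (hf : SD_map f) :
  [pchar F] =i [pchar G] /\
  (forall m n : int, (n%:~R : F) != 0 ->
     f (m%:~R / n%:~R) = (m%:~R / n%:~R : G)).
Proof.
have h2F := @char_ne0 F 2 isT hF2.
have h3F := @char_ne0 F 3 isT hF3.
have h5F := @char_ne0 F 5 isT hF5.
have h2G := @char_ne0 G 2 isT hG2.
have [f0 f1] := sd01 hf h2F h2G.
have fn := sd_nat hf h2F h3F h5F h2G.
split.
  move=> p; rewrite !inE; apply/andP/andP => [[pp /eqP pF]|[pp /eqP pG]];
    split => //.
    by rewrite -fn pF f0.
  have [//|pF0] := eqVneq (p%:R : F) 0.
  by move: (sd_inj hf pF0); rewrite fn pG f0 eqxx.
have fint (z : int) : f z%:~R = z%:~R.
  case: z => k.
    by rewrite -!pmulrn fn.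
  by rewrite NegzE !mulrNz -!pmulrn (sd_odd hf h2F h2G) fn.
move=> m n n0.
have fb0 : f n%:~R != 0 by rewrite -f0; exact: (sd_inj hf n0).
have finv : f (n%:~R)^-1 = (f n%:~R)^-1.
  apply: (mulfI fb0); rewrite -(sd_mul hf h2F h2G) !divff // f1.
by rewrite (sd_mul hf h2F h2G) finv !fint.
Qed.
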